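(* For all non-negative integers $n$, $p$ and $m$, $$\sum_{k=0}^n\frac{1}{2^{2k}}\binom{2(k+p)}{k+p}\binom{k+p}{k}H_{n-k}(m)\left(O_{k+p}-O_p\right)=\frac12\sum_{k=0}^n\frac{1}{2^{2k}}\binom{2(k+p)}{k+p}\binom{k+p}{k}H_{n-k}(m+1).$$ In particular, $$\sum_{k=0}^n\frac{1}{2^{2k}}\binom{2(k+p)}{k+p}\binom{k+p}{k}H_{n-k}=\frac{1}{2^{2n}}\,\frac{p+1}{2p+1}\binom{2(n+p+1)}{n+p+1}\binom{n+p+1}{n}\left(O_{n+p+1}-O_{p+1}\right).$$
   Context: For integers $m\ge 1$, $n\ge 0$, the multiple harmonic-like numbers are $H_n(m)=\sum_{1\le k_1+k_2+\cdots+k_m\le n}\frac{1}{k_1k_2\cdots k_m}$ (sum over positive integers $k_1,\dots,k_m$), with $H_n(0)=1$ for $n\ge 0$ and $H_0(m)=0$ for $m\ge1$. $H_n=\sum_{k=1}^n\frac1k$. The odd harmonic numbers are $O_n=\sum_{k=1}^n\frac{1}{2k-1}$, $O_0=0$. *)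

(* Defs.v *)
From mathcomp Require Import all_boot all_order all_algebra.
Set Implicit Arguments. Unset Strict Implicit. Unset Printing Implicit Defensive.
Import Order.TTheory GRing.Theory Num.Theory.
Local Open Scope ring_scope.

Definition harm (n : nat) : rat := \sum_(1 <= k < n.+1) (k%:R)^-1.

Definition oharm (n : nat) : rat := \sum_(1 <= k < n.+1) ((2 * k - 1)%N%:R)^-1.

(* Multiple harmonic-like numbers H_n(m): sum over positive k_1..k_m with
   1 <= k_1+...+k_m <= n of 1/(k_1...k_m); H_n(0) = 1.
   Each k_i ranges over 'I_(n+1) (i.e. 0..n), which loses nothing since
   k_i <= sum <= n. *)
Definition mharm (m n : nat) : rat :=
  if m is m0.+1 then
  \sum_(k : {ffun 'I_m -> 'I_n.+1} |
          [forall i, (0 < (k i : nat))%N] &&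
          ((1 <= \sum_(i < m) (k i : nat)) && (\sum_(i < m) (k i : nat) <= n))%N)
     \prod_(i < m) ((k i : nat)%:R)^-1
  else 1.

(* Main.v *)
Require Import Defs.
From mathcomp Require Import all_boot all_order all_algebra.
From mathcomp Require Import zify ring lra.
Import Order.TTheory GRing.Theory Num.Theory.
Set Implicit Arguments. Unset Strict Implicit.
Local Open Scope ring_scope.

Lemma n1_neq0 (j : nat) : 1 + j%:R != 0 :> rat. Proof. by rewrite nat1r pnatr_eq0. Qed.

Ltac nz := repeat (apply/andP; split); try done; try (by rewrite expf_neq0 // pnatr_eq0); apply/negP => /eqP; lra.

Definition fcons (T : finType) m (t : T) (g : {ffun 'I_m -> T}) : {ffun 'I_m.+1 -> T} :=
  [ffun i => if unlift ord0 i is Some j then g j else t].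

Lemma fcons0 (T : finType) m t (g : {ffun 'I_m -> T}) : fcons t g ord0 = t.
Proof. by rewrite ffunE unlift_none. Qed.
Lemma fconsS (T : finType) m t (g : {ffun 'I_m -> T}) j : fcons t g (lift ord0 j) = g j.
Proof. by rewrite ffunE liftK. Qed.

Lemma sum_ffunS (T : finType) m (F : {ffun 'I_m.+1 -> T} -> rat) :
  \sum_f F f = \sum_(t : T) \sum_(g : {ffun 'I_m -> T}) F (fcons t g).
Proof.
rewrite pair_big /=.
rewrite (reindex (fun q : T * {ffun 'I_m -> T} => fcons q.1 q.2)) //.
apply: onW_bij.
exists (fun f : {ffun 'I_m.+1 -> T} => (f ord0, [ffun j => f (lift ord0 j)])).
  move=> [t g] /=; rewrite fcons0; congr pair; apply/ffunP => j; by rewrite ffunE fconsS.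
move=> f /=; apply/ffunP => i; rewrite ffunE.
case: (unliftP ord0 i) => [j ->|->]; by rewrite ?ffunE.
Qed.

Definition G m N n := \sum_(k : {ffun 'I_m -> 'I_N} | [forall i, (0 < (k i : nat))%N] && (\sum_(i < m) (k i : nat) <= n)%N) \prod_(i < m) ((k i : nat)%:R : rat)^-1.

Lemma G0 N n : G 0 N n = 1.
Proof.
rewrite /G (eq_bigl xpredT); last first.
  by move=> f; rewrite big_ord0 andbT; apply/forallP => [[]].
rewrite (eq_bigr (fun _ => 1)); last by move=> f _; rewrite big_ord0.
by rewrite sumr_const card_ffun !card_ord expn0.
Qed.

Lemma GS m N n : G m.+1 N n = \sum_(t < N) (if (t <= n)%N then ((t : nat)%:R)^-1 * G m N (n - t) else 0).
Proof.
rewrite /G big_mkcond sum_ffunS; apply: eq_bigr => t _.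
have Hf : forall g : {ffun 'I_m -> 'I_N}, [forall i, (0 < (fcons t g i : nat))%N] = (0 < (t:nat))%N && [forall i, (0 < (g i : nat))%N].
  move=> g; apply/forallP/andP.
    move=> H; split; first by have := H ord0; rewrite fcons0.
    by apply/forallP => j; have := H (lift ord0 j); rewrite fconsS.
  move=> [H1 /forallP H2] i; case: (unliftP ord0 i) => [j ->|->]; by rewrite ?fconsS ?fcons0.
have Hs : forall g : {ffun 'I_m -> 'I_N}, \sum_(i < m.+1) (fcons t g i : nat) = (t + \sum_(i < m) (g i : nat))%N.
  by move=> g; rewrite big_ord_recl fcons0; congr addn; apply: eq_bigr => j _; rewrite fconsS.
have Hp : forall g : {ffun 'I_m -> 'I_N}, \prod_(i < m.+1) ((fcons t g i : nat)%:R : rat)^-1 = ((t:nat)%:R)^-1 * \prod_(i < m) ((g i : nat)%:R)^-1.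
  by move=> g; rewrite big_ord_recl fcons0; congr GRing.mul; apply: eq_bigr => j _; rewrite fconsS.
under eq_bigr do rewrite Hf Hs Hp.
case: (posnP t) => [t0|tpos].
  by rewrite t0 /= invr0 mul0r big1.
case: (leqP t n) => [tn|tn].
  rewrite big_distrr /= [RHS]big_mkcond; apply: eq_bigr => g _.
  by rewrite /= leq_subRL.
apply: big1 => g _ /=.
case: ifP => //; case/andP => _ H; move: (leq_trans (leq_addr _ _) H); by rewrite leqNgt tn.
Qed.

Definition conv (f g : nat -> rat) n := \sum_(k < n.+1) f k * g (n - k)%N.
Definition lseq (j : nat) : rat := (j%:R)^-1.
Fixpoint Hm m : nat -> rat := if m is m'.+1 then conv lseq (Hm m') else fun _ => 1.

Lemma G_Hm m N n : (n < N)%N -> G m N n = Hm m n.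
Proof.
elim: m n => [|m IH] n nN; first by rewrite G0.
rewrite GS /= /conv (big_ord_widen N (fun k => lseq k * Hm m (n - k)%N)) // [RHS]big_mkcond.
apply: eq_bigr => t _; rewrite ltnS; case: ifP => // tn.
by rewrite IH // (leq_ltn_trans (leq_subr _ _) nN).
Qed.

Lemma mharm_Hm m n : mharm m n = Hm m n.
Proof.
case: m => [//|m]; rewrite -(G_Hm _ (ltnSn n)) /mharm /G; apply: eq_bigl => k.
case Pk: [forall i, _] => //=.
suff -> : (1 <= \sum_(i < m.+1) (k i : nat))%N by [].
by rewrite big_ord_recl addn_gt0 (forallP Pk ord0).
Qed.

Lemma conv_poly f g n N : (n <= N)%N ->
  conv f g n = ((\poly_(i < N.+1) f i) * (\poly_(i < N.+1) g i))`_n.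
Proof.
move=> nN; rewrite coefM; apply: eq_bigr => j _.
rewrite !coef_poly !ltnS (leq_trans (leq_subr _ _) nN).
by rewrite (leq_trans _ nN) // -ltnS.
Qed.

Lemma coefM_eq (P Q Q' : {poly rat}) n : (forall i, (i <= n)%N -> Q`_i = Q'`_i) ->
  (P * Q)`_n = (P * Q')`_n.
Proof. by move=> H; rewrite !coefM; apply: eq_bigr => j _; rewrite H // leq_subr. Qed.

Lemma convA f g h n : conv f (conv g h) n = conv (conv f g) h n.
Proof.
set P := fun x : nat -> rat => \poly_(i < n.+1) x i.
rewrite (conv_poly _ _ (leqnn n)) (conv_poly (conv f g) _ (leqnn n)).
rewrite -/(P f) -/(P h) -/(P (conv g h)) -/(P (conv f g)).
rewrite (@coefM_eq _ _ (P g * P h)); last first.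
  move=> i ni; rewrite coef_poly ltnS ni; exact: conv_poly.
rewrite mulrA [(P (conv f g) * _)]mulrC [(P f * P g) * _]mulrC; apply: coefM_eq => i ni.
by rewrite coef_poly ltnS ni (conv_poly _ _ ni).
Qed.

Lemma E1 j : ('C((2*j).+2, j.+1))%:R = (2 * (2*j+1))%:R * ('C(2*j, j))%:R / (j.+1)%:R :> rat.
Proof.
have h1 := mul_bin_diag (2*j).+2 j. have h2 := mul_bin_down (2*j).+1 j.
have : ((j.+1 * j.+1) * 'C((2*j).+2, j.+1) = (2*j).+2 * ((2 * j).+1 * 'C(2 * j, j)))%N.
  rewrite h2 (_ : ((2*j).+1 - j = j.+1)%N); last lia.
  by rewrite [RHS]mulnCA h1 mulnA.
move/(congr1 (fun x => x%:R : rat)); rewrite !natrM => h.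
have hj : (j.+1)%:R != 0 :> rat by rewrite pnatr_eq0.
apply: (mulfI (mulf_neq0 hj hj)); rewrite h.
have -> : ((2*j).+2)%:R = 2 * (j.+1)%:R :> rat by rewrite -natrM; congr _%:R; lia.
by rewrite addn1; field; exact: n1_neq0.
Qed.

Lemma E2 j k : ('C(j.+1, k.+1))%:R = (j.+1)%:R * ('C(j,k))%:R / (k.+1)%:R :> rat.
Proof.
have h := mul_bin_diag j.+1 k.
have hk : (k.+1)%:R != 0 :> rat by rewrite pnatr_eq0.
apply: (mulIf hk); rewrite -(@natrM _ 'C(j.+1, k.+1) k.+1) mulnC -h natrM; field; exact: n1_neq0.
Qed.

Definition a p k : rat := (2%:R ^+ (2 * k))^-1 * ('C(2 * (k + p), k + p))%:R * ('C(k + p, k))%:R.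
Definition b p k : rat := a p k * (oharm (k + p) - oharm p).

Lemma arec p k : a p k.+1 = a p k * (2*(k+p)+1)%:R / (2*(k.+1))%:R.
Proof.
rewrite /a addSn (_ : (2 * (k+p).+1 = (2*(k+p)).+2)%N); last lia.
rewrite E1 E2 (_ : (2 * k.+1 = (2*k).+2)%N); last lia.
rewrite !exprS.
have h2 : (2%:R ^+ (2 * k)) != 0 :> rat by rewrite expf_neq0 // pnatr_eq0.
set x := 2%:R ^+ (2 * k). rewrite !natrM.
field.
have := ler0n rat k; have := ler0n rat p; move=> *; nz.
Qed.

Lemma oharmS n : oharm n.+1 = oharm n + ((2*n+1)%:R)^-1.
Proof.
rewrite /oharm big_nat_recr //=; congr (_ + _ ^-1); congr _%:R; lia.
Qed.

Lemma brec p k : b p k.+1 * (2*(k.+1))%:R = b p k * (2*(k+p)+1)%:R + a p k.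
Proof.
rewrite /b addSn oharmS arec.
have := ler0n rat k; have := ler0n rat p; move=> *.
rewrite !natrM !natrD. field. nz.
Qed.

Lemma lseq0 : lseq 0 = 0. Proof. by rewrite /lseq invr0. Qed.

Lemma cstep p k : conv (a p) lseq k.+1 * (2*(k.+1))%:R
   = conv (a p) lseq k * (2*(k+p)+1)%:R + 2 * a p k.
Proof.
rewrite /conv big_ord_recr /= subnn lseq0 mulr0 addr0 mulr_suml.
rewrite (eq_bigr (fun i : 'I_k.+1 => 2 * a p i + a p i * (2*i)%:R * lseq (k.+1 - i))); last first.
  move=> i _; have hi := ltn_ord i.
  have -> : (2 * k.+1)%:R = (2*i)%:R + 2 * (k.+1 - i)%:R :> rat.
    by rewrite -natrM -natrD; congr _%:R; lia.
  have : (k.+1 - i)%:R != 0 :> rat by rewrite pnatr_eq0; lia.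
  rewrite /lseq; move=> hd; field. done.
rewrite big_split /= -mulr_sumr big_ord_recr /= [X in _ + X]big_ord_recl /= muln0 mulr0 mul0r add0r.
rewrite [X in _ + X = _](eq_bigr (fun i : 'I_k => a p i * (2*(i+p)+1)%:R * lseq (k - i))); last first.
  move=> i _; rewrite /bump /= add1n subSS arec.
  have := ler0n rat i; have := ler0n rat p; move=> *.
  rewrite !natrM !natrD. field. nz.
rewrite big_ord_recr /= subnn lseq0 mulr0 addr0 mulr_suml.
rewrite [in RHS](eq_bigr (fun i : 'I_k => 2 * a p i + a p i * (2*(i+p)+1)%:R * lseq (k - i))); last first.
  move=> i _; have hi := ltn_ord i.
  have -> : (2 * (k + p) + 1)%:R = (2 * (i + p) + 1)%:R + 2 * (k - i)%:R :> rat.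
    by rewrite -natrM -natrD; congr _%:R; lia.
  have : (k - i)%:R != 0 :> rat by rewrite pnatr_eq0; lia.
  rewrite /lseq; move=> hd; field. done.
rewrite big_split /= -mulr_sumr. ring.
Qed.

Lemma bconv p k : 2 * b p k = conv (a p) lseq k.
Proof.
elim: k => [|k IH].
  by rewrite /b /conv big_ord1 add0n subrr !mulr0 lseq0 mulr0.
have hD : (2*(k.+1))%:R != 0 :> rat by rewrite pnatr_eq0.
apply: (mulIf hD); rewrite cstep -mulrA brec -IH; ring.
Qed.

Lemma conv_ext f f' g n : (forall k, f k = f' k) -> conv f g n = conv f' g n.
Proof. by move=> H; apply: eq_bigr => k _; rewrite H. Qed.

Lemma conv_scal c f g n : conv (fun k => c * f k) g n = c * conv f g n.
Proof. by rewrite /conv mulr_sumr; apply: eq_bigr => k _; rewrite mulrA. Qed.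

Lemma part1 p n m :
    \sum_(0 <= k < n.+1)
       ((2%:R ^+ (2 * k))^-1 * ('C(2 * (k + p), k + p))%:R * ('C(k + p, k))%:R
          * mharm m (n - k) * (oharm (k + p) - oharm p))
    = 2%:R^-1 * \sum_(0 <= k < n.+1)
       ((2%:R ^+ (2 * k))^-1 * ('C(2 * (k + p), k + p))%:R * ('C(k + p, k))%:R
          * mharm m.+1 (n - k)).
Proof.
rewrite !big_mkord.
transitivity (\sum_(k < n.+1) b p k * Hm m (n - k)%N).
  by apply: eq_bigr => k _; rewrite mharm_Hm /b /a; ring.
transitivity (2^-1 * \sum_(k < n.+1) a p k * Hm m.+1 (n - k)%N); last first.
  by congr (_ * _); apply: eq_bigr => k _; rewrite mharm_Hm /a.
change (conv (b p) (Hm m) n = 2^-1 * conv (a p) (conv lseq (Hm m)) n).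
rewrite convA -conv_scal; apply: conv_ext => k.
by rewrite -bconv mulrA mulVf ?mul1r // pnatr_eq0.
Qed.

Lemma harm_Hm n : harm n = Hm 1 n.
Proof.
rewrite /= /conv; under eq_bigr do rewrite mulr1.
rewrite -(big_mkord xpredT lseq) big_nat_recl // lseq0 add0r /harm big_add1 /=.
by [].
Qed.

Lemma E3 n p : ('C((n+p).+1, n))%:R = ((n+p).+1)%:R * ('C(n+p, n))%:R / (p.+1)%:R :> rat.
Proof.
have h := mul_bin_down (n+p).+1 n.
have hk : (p.+1)%:R != 0 :> rat by rewrite pnatr_eq0.
rewrite (_ : ((n+p).+1 - n = p.+1)%N) in h; last lia.
apply: (mulIf hk); rewrite -(@natrM _ 'C((n+p).+1, n) p.+1) mulnC -h natrM; field; exact: n1_neq0.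
Qed.

Lemma sumb p n : 2 * \sum_(0 <= k < n.+1) b p k =
  (2%:R ^+ (2 * n))^-1 * ((p + 1)%:R / (2 * p + 1)%:R)
      * ('C(2 * (n + p + 1), n + p + 1))%:R * ('C(n + p + 1, n))%:R
      * (oharm (n + p + 1) - oharm (p + 1)).
Proof.
have Rf : forall n, (2%:R ^+ (2 * n))^-1 * ((p + 1)%:R / (2 * p + 1)%:R)
      * ('C(2 * (n + p + 1), n + p + 1))%:R * ('C(n + p + 1, n))%:R
      * (oharm (n + p + 1) - oharm (p + 1)) =
   a p n * (2*(2*(n+p)+1))%:R / (2 * p + 1)%:R * (oharm (n+p).+1 - oharm p.+1).
  move=> k; rewrite !addn1 (_ : (2 * (k+p).+1 = (2*(k+p)).+2)%N); last lia.
  rewrite E1 E3 /a.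
  have := ler0n rat k; have := ler0n rat p; move=> *.
  rewrite !natrM !natrD. field. nz.
rewrite Rf; elim: n => [|n IH].
  by rewrite big_nat1 /b add0n !subrr !mulr0.
rewrite big_nat_recr //= mulrDr IH /b !addSn !oharmS arec.
have := ler0n rat n; have := ler0n rat p; move=> *.
rewrite !natrM !natrD. field. nz.
Qed.

Theorem theorem13 (n p : nat) :
  (forall m : nat,
    \sum_(0 <= k < n.+1)
       ((2%:R ^+ (2 * k))^-1 * ('C(2 * (k + p), k + p))%:R * ('C(k + p, k))%:R
          * mharm m (n - k) * (oharm (k + p) - oharm p))
    = 2%:R^-1 * \sum_(0 <= k < n.+1)
       ((2%:R ^+ (2 * k))^-1 * ('C(2 * (k + p), k + p))%:R * ('C(k + p, k))%:R
          * mharm m.+1 (n - k)) :> rat)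
  /\
  \sum_(0 <= k < n.+1)
     ((2%:R ^+ (2 * k))^-1 * ('C(2 * (k + p), k + p))%:R * ('C(k + p, k))%:R
        * harm (n - k))
  = (2%:R ^+ (2 * n))^-1 * ((p + 1)%:R / (2 * p + 1)%:R)
      * ('C(2 * (n + p + 1), n + p + 1))%:R * ('C(n + p + 1, n))%:R
      * (oharm (n + p + 1) - oharm (p + 1)) :> rat.
Proof.
split; first by move=> m; exact: part1.
rewrite -sumb.
have h := part1 p n 0.
transitivity (2 * (2^-1 * \sum_(0 <= k < n.+1)
       ((2%:R ^+ (2 * k))^-1 * ('C(2 * (k + p), k + p))%:R * ('C(k + p, k))%:R
          * mharm 1 (n - k)))).
  rewrite mulrA mulfV ?pnatr_eq0 // mul1r.
  by apply: eq_bigr => k _; rewrite harm_Hm mharm_Hm.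
rewrite -h; congr (_ * _); apply: eq_bigr => k _.
by rewrite /b /a /mharm mulr1.
Qed.
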